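(* For every $q\ge2$ and integers $n>h\ge1$, $$M_q(n,h)\ge\frac{\binom{n+q-1}{q-1}}{\phi(h,q)},\qquad M_q(n,h)\le\frac{\binom{n+q-1}{q-1}}{\beta(h,q)}+\sum_{j=1}^{q\lceil h/2\rceil}\binom{n+q-1-j}{q-2}.$$
   Context: $\triangle_n^{q-1}=\{\mathbf x\in\mathbb Z^q:x_i\ge0,\sum_ix_i=n\}$ (multisets of size $n$ over $\{0,\dots,q-1\}$), with $d_1(\mathbf x,\mathbf y)=\frac12\sum_i|x_i-y_i|$. $M_q(n,h)$ is the largest cardinality of a subset of $\triangle_n^{q-1}$ in which distinct elements are at $d_1$-distance $>h$ (equivalently, of a multiset code correcting $h$ deletions). $\beta(h,q)=\sum_{j\ge0}\binom{q-1}{j}\binom{\lceil h/2\rceil}{j}\binom{\lfloor h/2\rfloor+q-1-j}{q-1-j}$. $\phi(h,q)$ is the smallest order of a finite Abelian group containing a $B_h$ set of cardinality $q$, where a set $\{b_0,\dots,b_{q-1}\}$ in an Abelian group is a $B_h$ set if the sums $b_{i_1}+\dots+b_{i_h}$, $0\le i_1\le\dots\le i_h\le q-1$, are pairwise different. Convention: $\binom ab=0$ for integers $a<b$. *)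

(* Defs.v *)
From HB Require Import structures.
From mathcomp Require Import all_boot all_order all_algebra.
Set Implicit Arguments. Unset Strict Implicit. Unset Printing Implicit Defensive.
Import Order.TTheory GRing.Theory Num.Theory.

(* Points of the simplex triangle_n^{q-1}: vectors x in N^q with sum n.
   Coordinates are necessarily <= n, so we take them in 'I_n.+1 to get a
   finite ambient type. *)
Definition point (q n : nat) := {ffun 'I_q -> 'I_n.+1}.

Definition in_simplex (q n : nat) (x : point q n) : bool :=
  \sum_(i < q) (x i : nat) == n.

Definition absdiff (a b : nat) : nat := (a - b) + (b - a).

Definition d1 (q n : nat) (x y : point q n) : rat :=
  ((\sum_(i < q) absdiff (x i) (y i))%:R / 2)%R.

Definition is_code (q n h : nat) (C : {set point q n}) : bool :=
  [forall x in C, in_simplex x] &&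
  [forall x in C, forall y in C, (x != y) ==> (h%:R < d1 x y)%R].

Definition M (q n h : nat) : nat :=
  \max_(C : {set point q n} | is_code h C) #|C|.

(* beta(h,q) = sum_{j>=0} C(q-1,j) C(ceil(h/2),j) C(floor(h/2)+q-1-j, q-1-j);
   terms with j > q-1 vanish since C(q-1,j)=0. *)
Definition beta (h q : nat) : nat :=
  \sum_(j < q) 'C(q - 1, j) * 'C(uphalf h, j) * 'C(h./2 + q - 1 - j, q - 1 - j).

(* {b_0,...,b_{q-1}} (b injective, so the set has cardinality q) is a B_h set
   in the abelian group G: the sums b_{i_1}+...+b_{i_h} over
   0 <= i_1 <= ... <= i_h <= q-1 are pairwise different. *)
Definition Bh_set (G : zmodType) (h q : nat) (b : 'I_q -> G) : Prop :=
  injective b /\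
  forall s t : h.-tuple 'I_q,
    sorted (fun i j : 'I_q => (i <= j)%N) s ->
    sorted (fun i j : 'I_q => (i <= j)%N) t ->
    (\sum_(k < h) b (tnth s k))%R = (\sum_(k < h) b (tnth t k))%R -> s = t.

Definition is_phi (h q m : nat) : Prop :=
  (exists (G : finZmodType) (b : 'I_q -> G), Bh_set h b /\ #|G| = m) /\
  (forall (G : finZmodType) (b : 'I_q -> G), Bh_set h b -> (m <= #|G|)%N).

(* Main.v *)
Require Import Defs.
Set Warnings "-notation-overridden,-ambiguous-paths".
From HB Require Import structures.
From mathcomp Require Import all_boot all_order all_algebra zify.
From Stdlib Require Import Classical.
Import Order.TTheory GRing.Theory Num.Theory.
Set Implicit Arguments. Unset Strict Implicit. Unset Printing Implicit Defensive.

Lemma card_sum (T : finType) (P : pred T) : #|[set x | P x]| = \sum_x (P x : nat).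
Proof.
rewrite -sum1_card big_mkcond; apply: eq_bigr => x _; rewrite inE; by case: (P x).
Qed.

Definition ins (T : Type) m (t : T) (g : {ffun 'I_m -> T}) : {ffun 'I_m.+1 -> T} :=
  [ffun i => if unlift ord0 i is Some j then g j else t].

Lemma ins0 (T : Type) m (t : T) (g : {ffun 'I_m -> T}) : ins t g ord0 = t.
Proof. by rewrite ffunE unlift_none. Qed.
Lemma insS (T : Type) m (t : T) (g : {ffun 'I_m -> T}) j : ins t g (lift ord0 j) = g j.
Proof. by rewrite ffunE liftK. Qed.

Lemma sum_split (T : finType) m (F : {ffun 'I_m.+1 -> T} -> nat) :
  \sum_f F f = \sum_(t : T) \sum_(g : {ffun 'I_m -> T}) F (ins t g).
Proof.
rewrite pair_big /=.
pose h (p : T * {ffun 'I_m -> T}) := ins p.1 p.2.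
pose k (f : {ffun 'I_m.+1 -> T}) := (f ord0, [ffun j => f (lift ord0 j)]).
rewrite (reindex h) //.
exists k => [[t g] _|f _]; rewrite /h /k /=.
- by rewrite ins0; congr pair; apply/ffunP => j; rewrite ffunE insS.
- apply/ffunP => i; rewrite ffunE; case: (unliftP ord0 i) => [j ->|->].
  + by rewrite ffunE.
  + by [].
Qed.

Lemma sum_ins m (g : {ffun 'I_m -> nat}) t :
  \sum_(i < m.+1) ins t g i = t + \sum_(j < m) g j.
Proof. by rewrite big_ord_recl ins0; congr addn; apply: eq_bigr => j _; rewrite insS. Qed.

Definition cnt B q s := #|[set f : {ffun 'I_q -> 'I_B.+1} | \sum_i (f i : nat) == s]|.

Lemma cnt0 B s : cnt B 0 s = (s == 0).
Proof.
rewrite /cnt card_sum.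
rewrite (eq_bigr (fun _ => (s == 0) : nat)); last by move=> f _; rewrite big_ord0 eq_sym.
by rewrite sum_nat_const card_ffun !card_ord expn0 mul1n.
Qed.

Lemma cnt_rec B q s :
  cnt B q.+1 s = \sum_(t < B.+1) (t <= s) * cnt B q (s - t).
Proof.
rewrite /cnt card_sum sum_split; apply: eq_bigr => t _.
rewrite card_sum big_distrr /=; apply: eq_bigr => g _.
have -> : \sum_i (ins t g i : nat) = t + \sum_j (g j : nat).
  by rewrite big_ord_recl ins0; congr addn; apply: eq_bigr => j _; rewrite insS.
case: (leqP t s) => hts /=.
- rewrite mul1n; congr nat_of_bool; apply/eqP/eqP; lia.
- rewrite mul0n; case: eqP => //; lia.
Qed.

Lemma sum_le B s (g : nat -> nat) : s <= B ->
  \sum_(t < B.+1) (t <= s) * g t = \sum_(t < s.+1) g t.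
Proof.
move=> hs.
rewrite -(big_mkord xpredT (fun t => (t <= s) * g t)) -(big_mkord xpredT g).
rewrite (big_cat_nat _ (n := s.+1)) //=.
rewrite [X in _ + X]big1_seq ?addn0; last first.
  move=> i /andP [_]; rewrite mem_index_iota => /andP [hi _].
  by rewrite leqNgt hi.
by apply: eq_big_nat => i /andP [_ hi]; rewrite -ltnS hi mul1n.
Qed.

Lemma hockey s k : \sum_(t < s.+1) 'C(s - t + k, k) = 'C(s + k.+1, k.+1).
Proof.
elim: s => [|s IH]; first by rewrite big_ord1 /= sub0n !add0n !binn.
rewrite big_ord_recl subn0 /=.
rewrite (eq_bigr (fun i : 'I_s.+1 => 'C(s - i + k, k))); last by move=> i _; rewrite /bump /= add1n subSS.
by rewrite IH !addSn !addnS binS addnC.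
Qed.

Lemma cnt_formula B q s : s <= B -> cnt B q.+1 s = 'C(s + q, q).
Proof.
elim: q s => [|q IH] s hs.
- rewrite cnt_rec (@sum_le B s (fun t => cnt B _ (s - t))) // big_ord_recr /= subnn cnt0 /= addn0 bin0 addn1.
  rewrite big1 // => i _; rewrite cnt0; apply/eqP; rewrite eqb0; apply/eqP.
  have := ltn_ord i; lia.
- rewrite cnt_rec (@sum_le B s (fun t => cnt B _ (s - t))) // (eq_bigr (fun t : 'I_s.+1 => 'C(s - t + q, q))).
  + by rewrite hockey.
  + move=> t _; rewrite IH //; lia.
Qed.


Lemma hockey2 a j : \sum_(p < a.+1) 'C(a - p, j) = 'C(a.+1, j.+1).
Proof.
elim: a => [|a IH]; first by rewrite big_ord1 /= bin0n; case: j.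
rewrite big_ord_recl subn0.
rewrite (eq_bigr (fun i : 'I_a.+1 => 'C(a - i, j))); last by move=> i _; congr binomial; rewrite /bump /=; lia.
by rewrite IH [in RHS]binS addnC.
Qed.

Lemma hockey3 b k : \sum_(u < b) 'C(u + k, k) = 'C(b + k, k.+1).
Proof.
elim: b => [|b IH]; first by rewrite big_ord0 add0n bin_small.
by rewrite big_ord_recr /= IH addSn binS.
Qed.

Definition Gf m a b := \sum_(j < m.+1) 'C(m, j) * 'C(a, j) * 'C(b + (m - j), m - j).

Lemma Gf0 a b : Gf 0 a b = 1.
Proof. by rewrite /Gf big_ord1 /= subnn !bin0. Qed.

Lemma Gf_rec m a b :
  Gf m.+1 a b = \sum_(p < a.+1) Gf m (a - p) b + \sum_(u < b) Gf m a u.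
Proof.
rewrite /Gf.
have E1 : \sum_(p < a.+1) \sum_(j < m.+1) 'C(m, j) * 'C(a - p, j) * 'C(b + (m - j), m - j)
   = \sum_(j < m.+1) 'C(m, j) * 'C(b + (m - j), m - j) * ('C(a, j.+1) + 'C(a, j)).
  rewrite exchange_big /=; apply: eq_bigr => j _.
  rewrite -binS -hockey2 big_distrr /=; apply: eq_bigr => p _; lia.
have E2 : \sum_(u < b) \sum_(j < m.+1) 'C(m, j) * 'C(a, j) * 'C(u + (m - j), m - j)
   = \sum_(j < m.+1) 'C(m, j) * 'C(a, j) * 'C(b + (m - j), (m - j).+1).
  rewrite exchange_big /=; apply: eq_bigr => j _.
  by rewrite -hockey3 big_distrr.
rewrite E1 E2 {E1 E2}.
rewrite big_ord_recl /= subn0 bin0 bin0 !mul1n.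
rewrite (eq_bigr (fun i : 'I_m.+1 => 'C(m, i.+1) * 'C(a, i.+1) * 'C(b + (m - i), m - i)
          + 'C(m, i) * 'C(a, i.+1) * 'C(b + (m - i), m - i))); last first.
  by move=> i _; rewrite /bump /= add1n subSS binS mulnDl mulnDl.
rewrite big_split /=.
have E3 : \sum_(j < m.+1) 'C(m, j) * 'C(b + (m - j), m - j) * ('C(a, j.+1) + 'C(a, j))
   = \sum_(j < m.+1) 'C(m, j) * 'C(a, j.+1) * 'C(b + (m - j), m - j)
     + \sum_(j < m.+1) 'C(m, j) * 'C(a, j) * 'C(b + (m - j), m - j).
  rewrite -big_split /=; apply: eq_bigr => j _; lia.
have key : 'C(b + m.+1, m.+1) +
    \sum_(i < m.+1) 'C(m, i.+1) * 'C(a, i.+1) * 'C(b + (m - i), m - i) =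
    \sum_(j < m.+1) 'C(m, j) * 'C(a, j) * 'C(b + (m - j), m - j) +
    \sum_(j < m.+1) 'C(m, j) * 'C(a, j) * 'C(b + (m - j), (m - j).+1).
  rewrite -big_split /=.
  rewrite [RHS](eq_bigr (fun j : 'I_m.+1 => 'C(m, j) * 'C(a, j) * 'C((b + (m - j)).+1, (m - j).+1)));
    last by move=> j _; rewrite binS mulnDr addnC.
  rewrite [RHS]big_ord_recl /= subn0 bin0 bin0 !mul1n addnS.
  rewrite [in LHS]big_ord_recr /= (bin_small (ltnSn m)) !mul0n addn0.
  congr addn; apply: eq_bigr => i _.
  have hi := ltn_ord i.
  rewrite /bump /= add1n.
  rewrite -addnS. have -> : (m - i.+1).+1 = m - i by lia. by [].
rewrite E3 addnA key. by rewrite [LHS]addnC addnA.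
Qed.


Lemma leq_addsub x P a : (x + P <= a) = (x <= a) && (P <= a - x).
Proof. by apply/idP/andP => [h|[h1 h2]]; [split; lia | lia]. Qed.

Definition Acnt a0 b0 m a b :=
  #|[set f : {ffun 'I_m -> 'I_(a0 + b0).+1} |
      (\sum_j ((f j : nat) - b0) <= a) && (\sum_j (b0 - f j) <= b)]|.

Lemma Acnt_rec1 a0 b0 m a b :
  Acnt a0 b0 m.+1 a b = \sum_(t < (a0 + b0).+1)
     (t - b0 <= a) * (b0 - t <= b) * Acnt a0 b0 m (a - (t - b0)) (b - (b0 - t)).
Proof.
rewrite /Acnt card_sum sum_split; apply: eq_bigr => t _.
rewrite card_sum big_distrr /=; apply: eq_bigr => g _.
rewrite !big_ord_recl !ins0.
rewrite (eq_bigr (fun j => (g j : nat) - b0)); last by move=> j _; rewrite insS.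
rewrite [X in _ && (_ + X <= _)](eq_bigr (fun j => b0 - (g j : nat))); last by move=> j _; rewrite insS.
rewrite !leq_addsub.
by case: (t - b0 <= a); case: (b0 - t <= b); rewrite /= ?mul0n ?mul1n ?andbF.
Qed.

Lemma Acnt_rec a0 b0 m a b : a <= a0 -> b <= b0 ->
  Acnt a0 b0 m.+1 a b =
  \sum_(p < a.+1) Acnt a0 b0 m (a - p) b + \sum_(u < b) Acnt a0 b0 m a u.
Proof.
move=> ha hb; rewrite Acnt_rec1.
set H := fun t : nat => (t - b0 <= a) * (b0 - t <= b) * Acnt a0 b0 m (a - (t - b0)) (b - (b0 - t)).
rewrite -/(\sum_(t < (a0 + b0).+1) H t).
have -> : (a0 + b0).+1 = b0 + a0.+1 by lia.
rewrite big_split_ord /= addnC; congr addn.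
- have -> : a0.+1 = a.+1 + (a0 - a) by lia.
  rewrite big_split_ord /= [X in _ + X]big1 ?addn0; last first.
    move=> i _; rewrite /H.
    have -> : (b0 + (a.+1 + i) - b0 <= a) = false by apply/negbTE; lia.
    by rewrite /= !mul0n.
  apply: eq_bigr => p _; rewrite /H.
  have hp := ltn_ord p.
  have -> : b0 + p - b0 = p by lia.
  have -> : b0 - (b0 + p) = 0 by lia.
  rewrite subn0 (_ : (p <= a) = true); last by rewrite -ltnS.
  by rewrite /= !mul1n.
- rewrite (_ : \sum_(i < b0) H i = \sum_(i < (b0 - b) + b) H i); last by rewrite subnK.
  rewrite big_split_ord /= big1 ?add0n; last first.
    move=> i _; rewrite /H.
    have hi := ltn_ord i.
    have -> : (b0 - i <= b) = false by apply/negbTE; lia.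
    by rewrite /= muln0 mul0n.
  apply: eq_bigr => u _; rewrite /H.
  have hu := ltn_ord u.
  have -> : b0 - (b0 - b + u) = b - u by lia.
  have -> : b0 - b + u - b0 = 0 by lia.
  have -> : b - (b - u) = u by lia.
  rewrite subn0 (_ : (b - u <= b) = true) ?leq_subr //.
  by rewrite /= !mul1n.
Qed.

Lemma Acnt_eq a0 b0 m a b : a <= a0 -> b <= b0 -> Acnt a0 b0 m a b = Gf m a b.
Proof.
elim: m a b => [|m IH] a b ha hb.
- rewrite Gf0 /Acnt card_sum.
  rewrite (eq_bigr (fun _ => 1)); last by move=> f _; rewrite !big_ord0 !leq0n.
  by rewrite sum_nat_const card_ffun !card_ord expn0.
- rewrite Acnt_rec // Gf_rec; congr addn; apply: eq_bigr => i _; apply: IH => //.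
  + lia.
  + have := ltn_ord i; lia.
Qed.


Lemma sum_count (G : zmodType) q (b : 'I_q -> G) (s : seq 'I_q) :
  (\sum_(x <- s) b x = \sum_i b i *+ count_mem i s)%R.
Proof.
elim: s => [|y s IH].
  by rewrite big_nil; symmetry; apply: big1 => i _.
rewrite big_cons IH /=.
rewrite [RHS](eq_bigr (fun i => b i *+ (y == i) + b i *+ count_mem i s)%R); last first.
  by move=> i _; rewrite /= mulrnDr.
rewrite big_split /=; congr (_ + _)%R.
rewrite (bigD1 y) //= eqxx mulr1n big1 ?addr0 // => i /negbTE.
by rewrite eq_sym => ->; rewrite mulr0n.
Qed.

Lemma sum_tnth (G : zmodType) (T : Type) h (s : h.-tuple T) (F : T -> G) :
  (\sum_(k < h) F (tnth s k) = \sum_(x <- s) F x)%R.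
Proof. by rewrite big_tuple. Qed.

Definition bvec q h (i : 'I_q) : 'rV['Z_h.+1]_q := delta_mx ord0 i.

Lemma bvec_entry q h (s : seq 'I_q) j :
  (\sum_(x <- s) bvec h x)%R ord0 j = (count_mem j s)%:R%R.
Proof.
rewrite sum_count summxE.
rewrite (eq_bigr (fun i => ((j == i)%:R *+ count_mem i s)%R)); last first.
  by move=> i _; rewrite mulmxnE /bvec mxE eqxx /= eq_sym.
rewrite (bigD1 j) //= eqxx big1 ?addr0 // => i /negbTE.
by rewrite eq_sym => ->; rewrite mul0rn.
Qed.

Lemma bvec_Bh q h : 1 <= h -> Bh_set h (@bvec q h).
Proof.
move=> hh; split.
- move=> i j /(congr1 (fun A : 'rV_q => A ord0 i)); rewrite /bvec !mxE !eqxx /=.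
  case: (eqVneq i j) => // hij; rewrite eq_sym (negbTE hij) => /eqP.
- move=> s t ss st.
  rewrite !sum_tnth => E.
  have cnt_eq : forall j, count_mem j s = count_mem j t.
    move=> j; have := congr1 (fun A : 'rV_q => A ord0 j) E; rewrite /= !bvec_entry.
    move/(congr1 val); rewrite /= !val_Zp_nat ?ltnS //.
    have hs := count_size (pred1 j) s; have ht := count_size (pred1 j) t.
    rewrite size_tuple in hs; rewrite size_tuple in ht.
    by rewrite !modn_small // ltnS.
  apply: val_inj; apply: (@sorted_eq _ (fun i j : 'I_q => (i <= j)%N)) => //.
  + by move=> x y z; apply: leq_trans.
  + by move=> x y /anti_leq /val_inj.
  + by apply/allP => x _; rewrite /= cnt_eq eqxx.
Qed.

Lemma min_exists (P : nat -> Prop) k : P k -> exists m, P m /\ forall j, P j -> m <= j.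
Proof.
elim/ltn_ind: k => k IH Pk.
case: (classic (exists j, j < k /\ P j)) => [[j [hj Pj]]|H].
- exact: IH hj Pj.
- exists k; split => // j Pj; rewrite leqNgt; apply/negP => hj; apply: H; by exists j.
Qed.

Lemma phi_exists h q : 1 <= h -> exists phi, is_phi h q phi.
Proof.
move=> hh.
have [m [[G [b [Bb cG]]] hm]] := @min_exists
  (fun m => exists (G : finZmodType) (b : 'I_q -> G), Bh_set h b /\ #|G| = m) _
  (ex_intro _ ('rV['Z_h.+1]_q : finZmodType) (ex_intro _ (@bvec q h) (conj (bvec_Bh q hh) erefl))).
exists m; split; first by exists G, b.
by move=> G' b' Bb'; apply: hm; exists G', b'.
Qed.


Definition leI q := fun i j : 'I_q => (i <= j)%N.

Definition cseq q (c : 'I_q -> nat) : seq 'I_q :=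
  sort (@leI q) (flatten [seq nseq (c i) i | i <- enum 'I_q]).

Lemma sum_ind q (i0 : 'I_q) m : \sum_(i < q) (i == i0) * m = m.
Proof.
rewrite (bigD1 i0) //= eqxx mul1n big1 ?addn0 // => i /negbTE ->; by rewrite mul0n.
Qed.

Lemma cseq_count q (c : 'I_q -> nat) j : count_mem j (cseq c) = c j.
Proof.
have P : perm_eq (cseq c) (flatten [seq nseq (c i) i | i <- enum 'I_q]).
  by rewrite /cseq perm_sort perm_refl.
move/permP: P => ->.
rewrite count_flatten -map_comp sumnE big_map big_enum /=.
rewrite (eq_bigr (fun i => (i == j) * c j)); first by rewrite sum_ind.
move=> i _; rewrite count_nseq /=; case: eqP => [->|] //; by rewrite !mul0n.
Qed.

Lemma cseq_size q (c : 'I_q -> nat) : size (cseq c) = \sum_i c i.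
Proof.
rewrite /cseq size_sort size_flatten /shape -map_comp sumnE big_map big_enum /=.
by apply: eq_bigr => i _; rewrite size_nseq.
Qed.

Lemma cseq_sorted q (c : 'I_q -> nat) : sorted (@leI q) (cseq c).
Proof. by apply: sort_sorted => i j; apply: leq_total. Qed.

Definition sig (G : zmodType) q n (b : 'I_q -> G) (x : point q n) : G :=
  (\sum_i b i *+ (x i : nat))%R.

Lemma d1_gt q n (x y : point q n) h :
  2 * h < \sum_(i < q) absdiff (x i) (y i) -> (h%:R < d1 x y)%R.
Proof.
move=> H; rewrite /d1 ltr_pdivlMr ?ltr0n // -natrM ltr_nat mulnC; exact: H.
Qed.

Lemma code_pair k n h (G : zmodType) (b : 'I_k.+1 -> G) (x y : point k.+1 n) :
  Bh_set h b -> in_simplex x -> in_simplex y -> sig b x = sig b y ->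
  x = y \/ (h%:R < d1 x y)%R.
Proof.
move=> [_ Bb] /eqP Sx /eqP Sy Exy.
pose u i := (x i : nat) - y i.
pose v i := (y i : nat) - x i.
have E : \sum_(i < k.+1) (x i : nat) + \sum_(i < k.+1) v i = \sum_(i < k.+1) (y i : nat) + \sum_(i < k.+1) u i.
  rewrite -!big_split /=; apply: eq_bigr => i _; rewrite /u /v; lia.
have Ab : \sum_(i < k.+1) absdiff (x i) (y i) = \sum_(i < k.+1) u i + \sum_(i < k.+1) v i.
  by rewrite -big_split.
case: (leqP (\sum_(i < k.+1) u i) h) => hK; last first.
  by right; apply: d1_gt; rewrite Ab; lia.
left.
set K := \sum_(i < k.+1) u i in hK Ab E.
have EK : \sum_(i < k.+1) v i = K by lia.
pose cu i := u i + (i == ord0) * (h - K).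
pose cv i := v i + (i == ord0) * (h - K).
have Su : \sum_(i < k.+1) cu i = h by rewrite big_split /= sum_ind; change (K + (h - K) = h); lia.
have Sv : \sum_(i < k.+1) cv i = h by rewrite big_split /= sum_ind; rewrite EK; lia.
have Hu : size (cseq cu) == h by rewrite cseq_size Su.
have Hv : size (cseq cv) == h by rewrite cseq_size Sv.
have Ebv : (\sum_(i < k.+1) b i *+ u i = \sum_(i < k.+1) b i *+ v i)%R.
  have : (sig b x + \sum_(i < k.+1) b i *+ v i = sig b y + \sum_(i < k.+1) b i *+ u i)%R.
    rewrite /sig -big_split -big_split /=; apply: eq_bigr => i _.
    rewrite -mulrnDr -mulrnDr (_ : (x i : nat) + v i = y i + u i) //.
    rewrite /u /v; lia.
  by rewrite Exy => /addrI.
have Tsum : forall c (H : size (cseq c) == h),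
    (\sum_(k0 < h) b (tnth (Tuple H) k0) = \sum_(i < k.+1) b i *+ c i)%R.
  move=> c H; rewrite sum_tnth sum_count; apply: eq_bigr => i _.
  by rewrite (cseq_count c).
have Esum : (\sum_(i < k.+1) b i *+ cu i = \sum_(i < k.+1) b i *+ cv i)%R.
  rewrite /cu /cv.
  rewrite (eq_bigr (fun i => b i *+ u i + b i *+ ((i == ord0) * (h - K)))%R); last first.
    by move=> i _; rewrite mulrnDr.
  rewrite [RHS](eq_bigr (fun i => b i *+ v i + b i *+ ((i == ord0) * (h - K)))%R); last first.
    by move=> i _; rewrite mulrnDr.
  by rewrite !big_split Ebv.
have Ec := Bb (Tuple Hu) (Tuple Hv) (cseq_sorted _) (cseq_sorted _).
have {Ec} Ec := Ec (etrans (Tsum _ Hu) (etrans Esum (esym (Tsum _ Hv)))).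
apply/ffunP => i; apply: val_inj.
have := congr1 (fun t : h.-tuple 'I_k.+1 => count_mem i (tval t)) Ec.
rewrite /= (cseq_count cu) (cseq_count cv) /cu /cv /u /v => /eqP; rewrite eqn_add2r => /eqP; lia.
Qed.



Lemma card_SIM q n : #|[set x : point q.+1 n | in_simplex x]| = 'C(n + q, q).
Proof. by rewrite -(cnt_formula q (leqnn n)). Qed.

Lemma lower k n h (G : finZmodType) (b : 'I_k.+1 -> G) : Bh_set h b ->
  'C(n + k, k) <= #|G| * M k.+1 n h.
Proof.
move=> Bb.
set SIM := [set x : point k.+1 n | in_simplex x].
pose cl g := [set x in SIM | sig b x == g].
have hsum : #|SIM| = \sum_(g : G) #|cl g|.
  rewrite -sum1_card (partition_big (sig b) xpredT) //=.
  apply: eq_bigr => g _; rewrite sum1dep_card; apply: eq_card => x; by rewrite !inE.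
pose gs := [arg max_(g > 0%R) #|cl g|].
have hle : #|SIM| <= #|G| * #|cl gs|.
  rewrite hsum /gs; case: arg_maxnP => // g0 _ Hmax.
  rewrite -sum_nat_const; apply: leq_sum => g _; exact: Hmax.
have code : is_code h (cl gs).
  apply/andP; split.
  - apply/forallP => x; apply/implyP; rewrite !inE => /andP []; by [].
  - apply/forallP => x; apply/implyP; rewrite !inE => /andP [sx /eqP gx].
    apply/forallP => y; apply/implyP; rewrite !inE => /andP [sy /eqP gy].
    apply/implyP => hxy.
    have [exy|//] := code_pair Bb sx sy (etrans gx (esym gy)).
    by rewrite exy eqxx in hxy.
rewrite -card_SIM; apply: (leq_trans hle); rewrite leq_mul2l; apply/orP; right.
exact: (@leq_bigmax_cond _ (fun C : {set point k.+1 n} => is_code h C) (fun C => #|C|)).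
Qed.



Lemma le_of_sum m (F : 'I_m -> nat) N i : \sum_(j < m) F j = N -> F i <= N.
Proof. by move=> <-; rewrite (bigD1 i) //= leq_addr. Qed.

Lemma d1_le q n (x y : point q n) h :
  (h%:R < d1 x y)%R -> 2 * h < \sum_(i < q) absdiff (x i) (y i).
Proof.
by rewrite /d1 ltr_pdivlMr ?ltr0n // -natrM ltr_nat mulnC.
Qed.

Lemma tele N r K : K <= N ->
  'C(N + r.+1, r.+1) = 'C(N - K + r.+1, r.+1) + \sum_(1 <= j < K.+1) 'C(N + r.+1 - j, r).
Proof.
elim: K => [|K IH] hK.
  by rewrite subn0 big_geq // addn0.
rewrite IH ?(ltnW hK) // [in RHS]big_nat_recr //=.
have -> : 'C(N - K + r.+1, r.+1) = 'C(N - K.+1 + r.+1, r.+1) + 'C(N + r.+1 - K.+1, r).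
  have -> : N - K + r.+1 = (N - K.+1 + r.+1).+1 by lia.
  rewrite binS; congr addn; congr binomial; lia.
lia.
Qed.

Lemma sum_ext r N K L : K <= L ->
  \sum_(1 <= j < K.+1) 'C(N + r.+1 - j, r) <= \sum_(1 <= j < L.+1) 'C(N + r.+1 - j, r).
Proof.
move=> hKL; rewrite [X in _ <= X](big_cat_nat _ (n := K.+1)) //= ?leq_addr //; lia.
Qed.

Lemma bd_bound r n K L : K <= L ->
  forall I, (K <= n -> 'C(n - K + r.+1, r.+1) <= I) ->
  'C(n + r.+1, r.+1) - I <= \sum_(1 <= j < L.+1) 'C(n + r.+1 - j, r).
Proof.
move=> hKL I HI.
case: (leqP K n) => hKn.
- have := HI hKn; rewrite (tele r hKn) => HI'.
  apply: leq_trans (sum_ext r n hKL); lia.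
- apply: leq_trans (leq_subr _ _) _.
  rewrite (tele r (leqnn n)) (_ : n - n = 0) ?subnn // add0n binn.
  apply: leq_trans (sum_ext (K := n.+1) r n _); last by lia.
  rewrite [X in _ <= X]big_nat_recr //= (_ : n + r.+1 - n.+1 = r) ?binn; lia.
Qed.



Definition Pp m c (f : {ffun 'I_m -> 'I_c}) bb := \sum_(j < m) ((f j : nat) - bb).
Definition Nn m c (f : {ffun 'I_m -> 'I_c}) bb := \sum_(j < m) (bb - (f j : nat)).

Definition yv r n c (x : point r.+1 n) (f : {ffun 'I_r -> 'I_c}) bb : {ffun 'I_r.+1 -> nat} :=
  ins ((x ord0 : nat) + Nn f bb - Pp f bb) [ffun j => (x (lift ord0 j) : nat) + f j - bb].

Definition interior r n a bb (x : point r.+1 n) :=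
  (a <= x ord0) && [forall j, bb <= x (lift ord0 j)].

Definition Phi r n c bb (p : point r.+1 n * {ffun 'I_r -> 'I_c}) : point r.+1 n :=
  [ffun i => inord (yv p.1 p.2 bb i)].

Lemma yv_sum r n c a bb (x : point r.+1 n) (f : {ffun 'I_r -> 'I_c}) :
  in_simplex x -> interior a bb x -> Pp f bb <= a ->
  \sum_(i < r.+1) yv x f bb i = n.
Proof.
move=> /eqP Sx /andP [h0 /forallP hj] hP.
rewrite /yv sum_ins.
rewrite (eq_bigr (fun j => (x (lift ord0 j) : nat) + f j - bb)); last by move=> j _; rewrite ffunE.
rewrite big_ord_recl in Sx.
have E : \sum_(j < r) ((x (lift ord0 j) : nat) + f j - bb) + Nn f bb =
         \sum_(j < r) (x (lift ord0 j) : nat) + Pp f bb.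
  rewrite /Nn /Pp -!big_split /=; apply: eq_bigr => j _; have := hj j; lia.
set Y := \sum_(j < r) ((x (lift ord0 j) : nat) + f j - bb) in E *.
set X' := \sum_(j < r) (x (lift ord0 j) : nat) in E Sx.
lia.
Qed.

Lemma Phi_val r n c a bb (x : point r.+1 n) (f : {ffun 'I_r -> 'I_c}) i :
  in_simplex x -> interior a bb x -> Pp f bb <= a ->
  (Phi bb (x, f) i : nat) = yv x f bb i.
Proof.
move=> Sx Ix hP; rewrite ffunE /= inordK // ltnS.
exact: le_of_sum (yv_sum Sx Ix hP).
Qed.

Lemma Phi_sim r n c a bb (x : point r.+1 n) (f : {ffun 'I_r -> 'I_c}) :
  in_simplex x -> interior a bb x -> Pp f bb <= a ->
  in_simplex (Phi bb (x, f)).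
Proof.
move=> Sx Ix hP; rewrite /in_simplex.
rewrite (eq_bigr (fun i => yv x f bb i)); last by move=> i _; rewrite (Phi_val _ Sx Ix hP).
by rewrite (yv_sum Sx Ix hP).
Qed.

Lemma Phi_dist r n a bb (x y : point r.+1 n) (f g : {ffun 'I_r -> 'I_(a + bb).+1}) :
  in_simplex x -> interior a bb x -> Pp f bb <= a -> Nn f bb <= bb ->
  in_simplex y -> interior a bb y -> Pp g bb <= a -> Nn g bb <= bb ->
  Phi bb (x, f) = Phi bb (y, g) ->
  \sum_(i < r.+1) absdiff (x i) (y i) <= 2 * (a + bb) /\
  (x = y -> f = g).
Proof.
move=> Sx Ix Pf Nf Sy Iy Pg Ng E.
have EE : forall i, yv x f bb i = yv y g bb i.
  move=> i; rewrite -(Phi_val _ Sx Ix Pf) -(Phi_val _ Sy Iy Pg) E //.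
have E0 := EE ord0; rewrite /yv !ins0 in E0.
have Ej : forall j, (x (lift ord0 j) : nat) + f j - bb = (y (lift ord0 j) : nat) + g j - bb.
  by move=> j; have := EE (lift ord0 j); rewrite /yv !insS !ffunE.
move: Ix Iy => /andP [x0 /forallP xj] /andP [y0 /forallP yj].
split; last first.
  move=> exy; apply/ffunP => j; apply: ord_inj.
  have := Ej j; have := xj j; have := yj j; rewrite exy => h1 h2 h3; move: h1 h2 h3; set t := (y (lift ord0 j) : nat); set u := (f j : nat); set v := (g j : nat); lia.
rewrite big_ord_recl.
have A1 : \sum_(j < r) absdiff (x (lift ord0 j)) (y (lift ord0 j)) =
          \sum_(j < r) ((f j : nat) - g j) + \sum_(j < r) ((g j : nat) - f j).
  rewrite -big_split /=; apply: eq_bigr => j _; rewrite /absdiff.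
  have := Ej j; have := xj j; have := yj j; lia.
have A2 : \sum_(j < r) ((f j : nat) - g j) <= Pp f bb + Nn g bb.
  rewrite /Pp /Nn -big_split /=; apply: leq_sum => j _; lia.
have A3 : \sum_(j < r) ((g j : nat) - f j) <= Pp g bb + Nn f bb.
  rewrite /Pp /Nn -big_split /=; apply: leq_sum => j _; lia.
have A4 : \sum_(j < r) ((f j : nat) - g j) + Nn f bb + Pp g bb =
          \sum_(j < r) ((g j : nat) - f j) + Pp f bb + Nn g bb.
  rewrite /Pp /Nn -!big_split /=; apply: eq_bigr => j _; lia.
rewrite A1 /absdiff; lia.
Qed.



Lemma M_attained q n h : exists2 C : {set point q n}, is_code h C & M q n h = #|C|.
Proof.
have h0 : 0 < #|[pred C : {set point q n} | is_code h C]|.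
  apply/card_gt0P; exists set0; rewrite inE; apply/andP; split.
  - by apply/forallP => x; rewrite inE.
  - by apply/forallP => x; rewrite inE.
have [C0 hC eM] := eq_bigmax_cond (fun C : {set point q n} => #|C|) h0.
by exists C0; [rewrite inE in hC | rewrite -eM].
Qed.

Lemma upper_nat r n h (C0 : {set point r.+2 n}) : is_code h C0 ->
  exists CI : nat,
    CI * Gf r.+1 (uphalf h) h./2 <= 'C(n + r.+1, r.+1) /\
    #|C0| <= CI + \sum_(1 <= j < (r.+2 * uphalf h).+1) 'C(n + r.+1 - j, r).
Proof.
move=> /andP [/forallP hsim /forallP hd].
set a := uphalf h; set bb := h./2.
have hab : a + bb = h by rewrite /a /bb uphalf_half -addnA addnn odd_double_half.
have hba : bb <= a by rewrite /a uphalf_half; lia.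
set SIM := [set x : point r.+2 n | in_simplex x].
have cSIM : #|SIM| = 'C(n + r.+1, r.+1) by rewrite card_SIM.
set Aset := [set f : {ffun 'I_r.+1 -> 'I_(a + bb).+1} |
      (\sum_j ((f j : nat) - bb) <= a) && (\sum_j (bb - f j) <= bb)].
have cA : #|Aset| = Gf r.+1 a bb by rewrite -(Acnt_eq r.+1 (leqnn a) (leqnn bb)).
have inA : forall f, f \in Aset -> Pp f bb <= a /\ Nn f bb <= bb.
  by move=> f; rewrite inE => /andP [h1 h2]; split.
have inC : forall x, x \in C0 -> in_simplex x.
  by move=> x hx; have := hsim x; rewrite hx.
set CI := [set x in C0 | interior a bb x].
set INT := [set x in SIM | interior a bb x].
exists #|CI|; split.
- rewrite -cA -cSIM -cardsX.
  rewrite -(@card_in_imset _ _ (@Phi r.+1 n (a + bb).+1 bb)); last first.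
    move=> [x f] [y g]; rewrite !in_setX /= => /andP [hxC hf] /andP [hyC hg] E.
    move: hxC hyC; rewrite !inE => /andP [hx Ix] /andP [hy Iy].
    have [Pf Nf] := inA f hf; have [Pg Ng] := inA g hg.
    have [Hd Hfg] := Phi_dist (inC x hx) Ix Pf Nf (inC y hy) Iy Pg Ng E.
    case: (eqVneq x y) => [exy|nxy]; first by rewrite exy (Hfg exy).
    have := hd x; rewrite hx /= => /forallP /(_ y); rewrite hy nxy /= => /d1_le H2.
    set SS := \sum_(i < r.+2) absdiff (x i) (y i) in H2 Hd; lia.
  apply: subset_leq_card; apply/subsetP => z /imsetP [[x f]]; rewrite in_setX /=.
  move=> /andP [hxC hf] ->; move: hxC; rewrite !inE => /andP [hx Ix].
  have [Pf _] := inA f hf.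
  exact: Phi_sim (inC x hx) Ix Pf.
- set S := \sum_(1 <= j < _) _.
  have E1 : #|C0| = #|CI| + #|C0 :\: [set x | interior a bb x]|.
    rewrite -(cardsID [set x | interior a bb x] C0); congr addn.
    by apply: eq_card => x; rewrite !inE.
  have E2 : #|C0 :\: [set x | interior a bb x]| <= #|SIM| - #|INT|.
    have -> : #|SIM| - #|INT| = #|SIM :\: INT|.
      rewrite cardsD; congr subn; apply: eq_card => x; rewrite !inE; by case: (in_simplex x).
    apply: subset_leq_card; apply/subsetP => x; rewrite !inE => /andP [nI hx].
    by rewrite (negbTE nI) /= andbF (inC x hx).
  set K := a + r.+1 * bb.
  have E3 : K <= n -> 'C(n - K + r.+1, r.+1) <= #|INT|.
    move=> hK.
    rewrite -(cnt_formula r.+1 (leq_subr K n)).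
    set W := [set w : point r.+2 n | \sum_i (w i : nat) == n - K].
    pose c (i : 'I_r.+2) := if i == ord0 then a else bb.
    have Sc : \sum_(i < r.+2) c i = K.
      rewrite big_ord_recl /c eqxx (eq_bigr (fun _ => bb)); last first.
        by [].
      by rewrite sum_nat_const card_ord.
    pose sh (w : point r.+2 n) : point r.+2 n := [ffun i => inord ((w i : nat) + c i)].
    have shv : forall w, w \in W -> forall i, (sh w i : nat) = w i + c i.
      move=> w; rewrite inE => /eqP Sw i; rewrite ffunE inordK // ltnS.
      apply: (@le_of_sum _ (fun i => (w i : nat) + c i)).
      by rewrite big_split /= Sw Sc subnK.
    have -> : cnt n r.+2 (n - K) = #|W| by [].
    rewrite -(@card_in_imset _ _ sh); last first.
      move=> w w' hw hw' E; apply/ffunP => i; apply: ord_inj.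
      have := congr1 (fun z : point r.+2 n => (z i : nat)) E; rewrite /= shv // shv //.
      by move/eqP; rewrite eqn_add2r => /eqP.
    apply: subset_leq_card; apply/subsetP => z /imsetP [w hw ->]; rewrite !inE.
    apply/andP; split.
      rewrite /in_simplex (eq_bigr (fun i => (w i : nat) + c i)); last by move=> i _; rewrite shv.
      by move: hw; rewrite inE => /eqP Sw; rewrite big_split /= Sw Sc subnK.
    apply/andP; split; first by rewrite shv // /c eqxx leq_addl.
    apply/forallP => j; rewrite shv // /c eq_sym (negbTE (neq_lift _ _)) leq_addl //.
  have hKL : K <= r.+2 * a.
    rewrite /K; nia.
  have := bd_bound hKL E3; rewrite -cSIM -/S.
  lia.
Qed.



Lemma beta_Gf h r : beta h r.+2 = Gf r.+1 (uphalf h) h./2.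
Proof.
rewrite /beta /Gf; apply: eq_bigr => j _; have hj := ltn_ord j.
have -> : r.+2 - 1 = r.+1 by lia.
have -> : h./2 + r.+2 - 1 - j = h./2 + (r.+1 - j) by lia.
by [].
Qed.

Lemma Gf_gt0 m a b : 0 < Gf m a b.
Proof.
rewrite /Gf big_ord_recl /= !bin0 !mul1n subn0.
apply: leq_trans (leq_addr _ _); rewrite bin_gt0; lia.
Qed.

Unset Implicit Arguments.

Theorem mainTheorem15 (q n h : nat) (hq : (2 <= q)%N) (hh : (1 <= h)%N)
    (hnh : (h < n)%N) :
  (exists phi : nat, is_phi h q phi /\
     ('C(n + q - 1, q - 1)%:R / phi%:R <= (M q n h)%:R :> rat)%R) /\
  ((M q n h)%:R <=
     'C(n + q - 1, q - 1)%:R / (beta h q)%:R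
     + (\sum_(1 <= j < (q * uphalf h).+1) 'C(n + q - 1 - j, q - 2))%:R
     :> rat)%R.
Proof.
case: q hq => [|[|r]] // hq.
have e1 : r.+2 - 1 = r.+1 by lia.
have e2 : n + r.+2 - 1 = n + r.+1 by lia.
rewrite e1 e2.
split.
- have [phi [[G [b [Bb cG]]] hmin]] := phi_exists r.+2 hh.
  exists phi; split; first by split; [exists G, b | exact: hmin].
  have hl := lower n Bb.
  have hG : 0 < #|G| by apply/card_gt0P; exists 0%R.
  rewrite -cG ler_pdivrMr ?ltr0n // -natrM ler_nat mulnC.
  exact: hl.
- have [C0 hC eM] := M_attained r.+2 n h.
  have [CI [H1 H2]] := upper_nat hC.
  rewrite eM beta_Gf.
  rewrite (eq_big_nat _ _ (F2 := fun j => 'C(n + r.+1 - j, r))); last first.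
    by move=> j hj; congr binomial; lia.
  set S := \sum_(1 <= j < _) _ in H2 *.
  apply: (@le_trans _ _ (CI%:R + S%:R)%R).
    by rewrite -natrD ler_nat.
  apply: lerD => //.
  by rewrite ler_pdivlMr ?ltr0n ?Gf_gt0 // -natrM ler_nat.
Qed.
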